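(* The monomorphisms in $\mathsf{SquaMS}$ are exactly the morphisms which are one-to-one.
   Context: Let $M_0=\{(r,s)\in[0,1]^2: r\in\{0,1\}\text{ or } s\in\{0,1\}\}$. A square metric space is a pair $(X,S_X)$ with $X$ a metric space with all distances at most $2$ and $S_X\colon M_0\to X$ injective such that (sq1) for $i\in\{0,1\}$, $r,s\in[0,1]$: $d_X(S_X(i,r),S_X(i,s))=|s-r|$ and $d_X(S_X(r,i),S_X(s,i))=|s-r|$; (sq2) $d_X(S_X(r,s),S_X(t,u))\ge|r-t|+|s-u|$ for all $(r,s),(t,u)\in M_0$. $\mathsf{SquaMS}$ has these as objects and short maps $f\colon X\to Y$ with $f\circ S_X=S_Y$ as morphisms. *)

(* Defs.v *)
From Stdlib Require Import Reals.
Open Scope R_scope.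

Definition inM0 (p : R * R) : Prop :=
  (0 <= fst p <= 1) /\ (0 <= snd p <= 1) /\
  (fst p = 0 \/ fst p = 1 \/ snd p = 0 \/ snd p = 1).

Definition M0 : Type := { p : R * R | inM0 p }.

Definition M0x (p : M0) : R := fst (proj1_sig p).
Definition M0y (p : M0) : R := snd (proj1_sig p).

Record SquaMS : Type := mkSquaMS {
  carrier :> Type;
  dist : carrier -> carrier -> R;
  dist_nonneg : forall x y, 0 <= dist x y;
  dist_eq0 : forall x y, dist x y = 0 <-> x = y;
  dist_sym : forall x y, dist x y = dist y x;
  dist_triangle : forall x y z, dist x z <= dist x y + dist y z;
  dist_le2 : forall x y, dist x y <= 2;
  sqS : M0 -> carrier;
  sqS_inj : forall p q, sqS p = sqS q -> p = q;
  sq1_vert : forall (p q : M0), (M0x p = 0 \/ M0x p = 1) -> M0x q = M0x p ->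
      dist (sqS p) (sqS q) = Rabs (M0y q - M0y p);
  sq1_horiz : forall (p q : M0), (M0y p = 0 \/ M0y p = 1) -> M0y q = M0y p ->
      dist (sqS p) (sqS q) = Rabs (M0x q - M0x p);
  sq2 : forall (p q : M0),
      dist (sqS p) (sqS q) >= Rabs (M0x p - M0x q) + Rabs (M0y p - M0y q)
}.

Record SqHom (X Y : SquaMS) : Type := mkSqHom {
  hom_fun :> carrier X -> carrier Y;
  hom_short : forall x y, dist Y (hom_fun x) (hom_fun y) <= dist X x y;
  hom_S : forall p, hom_fun (sqS X p) = sqS Y p
}.

Definition sq_comp {X Y Z : SquaMS} (g : SqHom Y Z) (f : SqHom X Y) :
  carrier X -> carrier Z := fun x => g (f x).

(* Morphisms are equal iff their underlying maps agree (the other fields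
   are proofs). *)
Definition hom_eq {X Y : SquaMS} (f g : SqHom X Y) : Prop :=
  forall x, f x = g x.

Definition monomorphism {X Y : SquaMS} (f : SqHom X Y) : Prop :=
  forall (Z : SquaMS) (g h : SqHom Z X),
    (forall z, f (g z) = f (h z)) -> hom_eq g h.

Definition one_to_one {X Y : SquaMS} (f : SqHom X Y) : Prop :=
  forall x y, f x = f y -> x = y.

(* Main.v *)
Require Import Defs.
From Stdlib Require Import Reals Lra Classical.
Open Scope R_scope.

Section Build.
Variable X : SquaMS.
Variables x y : carrier X.
Hypothesis Hxy : x <> y.

Definition dm (q : M0) : R := Rmax (Defs.dist X x (sqS X q)) (Defs.dist X y (sqS X q)).

Definition dZ (a b : option M0) : R :=
  match a, b with
  | Some p, Some q => Defs.dist X (sqS X p) (sqS X q)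
  | None, Some q => dm q
  | Some p, None => dm p
  | None, None => 0
  end.

Lemma dm_x q : Defs.dist X x (sqS X q) <= dm q.
Proof. apply Rmax_l. Qed.
Lemma dm_y q : Defs.dist X y (sqS X q) <= dm q.
Proof. apply Rmax_r. Qed.

Ltac tri a b c := pose proof (Defs.dist_triangle X a b c).
Ltac sy a b := pose proof (Defs.dist_sym X a b).

Lemma dZ_nonneg a b : 0 <= dZ a b.
Proof.
  destruct a, b; simpl; try lra; try apply Defs.dist_nonneg;
  (eapply Rle_trans; [apply Defs.dist_nonneg| apply dm_x]).
Qed.

Lemma dZ_eq0 a b : dZ a b = 0 <-> a = b.
Proof.
  destruct a as [p|], b as [q|]; simpl.
  - split; intro H. apply (Defs.dist_eq0 X) in H. apply sqS_inj in H. now subst.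
    inversion H; subst. now apply Defs.dist_eq0.
  - split; intro H; [|discriminate]. exfalso.
    pose proof (dm_x p); pose proof (dm_y p).
    pose proof (Defs.dist_nonneg X x (sqS X p)); pose proof (Defs.dist_nonneg X y (sqS X p)).
    assert (A: Defs.dist X x (sqS X p) = 0) by lra. assert (B: Defs.dist X y (sqS X p) = 0) by lra.
    apply Defs.dist_eq0 in A; apply Defs.dist_eq0 in B. congruence.
  - split; intro H; [|discriminate]. exfalso.
    pose proof (dm_x q); pose proof (dm_y q).
    pose proof (Defs.dist_nonneg X x (sqS X q)); pose proof (Defs.dist_nonneg X y (sqS X q)).
    assert (A: Defs.dist X x (sqS X q) = 0) by lra. assert (B: Defs.dist X y (sqS X q) = 0) by lra.
    apply Defs.dist_eq0 in A; apply Defs.dist_eq0 in B. congruence.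
  - tauto.
Qed.

Lemma dZ_sym a b : dZ a b = dZ b a.
Proof. destruct a, b; simpl; auto; apply Defs.dist_sym. Qed.

Lemma dZ_tri a b c : dZ a c <= dZ a b + dZ b c.
Proof.
  pose proof (dZ_nonneg a b) as N1; pose proof (dZ_nonneg b c) as N2.
  destruct a as [p|], b as [q|], c as [r|]; simpl in *; try lra.
  - apply Defs.dist_triangle.
  - unfold dm at 1. apply Rmax_lub.
    + tri x (sqS X q) (sqS X p); sy x (sqS X p); sy (sqS X q) (sqS X p); pose proof (dm_x q); lra.
    + tri y (sqS X q) (sqS X p); sy y (sqS X p); sy (sqS X q) (sqS X p); pose proof (dm_y q); lra.
  - tri (sqS X p) x (sqS X r); sy x (sqS X p); pose proof (dm_x p); pose proof (dm_x r); lra.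
  - unfold dm at 1. apply Rmax_lub.
    + tri x (sqS X q) (sqS X r); pose proof (dm_x q); lra.
    + tri y (sqS X q) (sqS X r); pose proof (dm_y q); lra.
Qed.

Lemma dZ_le2 a b : dZ a b <= 2.
Proof.
  destruct a, b; simpl; try lra; try apply Defs.dist_le2;
  (apply Rmax_lub; apply Defs.dist_le2).
Qed.

Definition Z : SquaMS.
Proof.
  refine (mkSquaMS (option M0) dZ dZ_nonneg dZ_eq0 dZ_sym dZ_tri dZ_le2
           (@Some M0) _ _ _ _).
  - intros p q H; now inversion H.
  - intros p q; simpl; apply sq1_vert.
  - intros p q; simpl; apply sq1_horiz.
  - intros p q; simpl; apply sq2.
Defined.

Definition gfun (z : X) (a : option M0) : X :=
  match a with Some p => sqS X p | None => z end.

Lemma g_short (z : X) (Hz : z = x \/ z = y) a b :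
  Defs.dist X (gfun z a) (gfun z b) <= Defs.dist Z a b.
Proof.
  destruct a as [p|], b as [q|]; simpl.
  - lra.
  - sy z (sqS X p). destruct Hz; subst; [pose proof (dm_x p)|pose proof (dm_y p)]; lra.
  - destruct Hz; subst; [pose proof (dm_x q)|pose proof (dm_y q)]; lra.
  - right. now apply Defs.dist_eq0.
Qed.

Definition G (z : X) (Hz : z = x \/ z = y) : SqHom Z X :=
  mkSqHom Z X (gfun z) (g_short z Hz) (fun p => eq_refl).

End Build.

Theorem mainTheorem19 (X Y : SquaMS) (f : SqHom X Y) :
  monomorphism f <-> one_to_one f.
Proof.
  split.
  - intros Hm x y Hf. destruct (classic (x = y)) as [E|Hne]; [exact E|].
    exfalso.
    pose (g := G X x y Hne x (or_introl eq_refl)).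
    pose (h := G X x y Hne y (or_intror eq_refl)).
    assert (Hgh : hom_eq g h).
    { apply (Hm (Z X x y Hne) g h). intros [p|]; simpl; [reflexivity|exact Hf]. }
    apply Hne. exact (Hgh None).
  - intros Hi Z g h Hgh z. apply Hi. apply Hgh.
Qed.
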